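(* For each $t\ge0$ there exists $\pi^*\in\mathcal{FG}$ such that $V_{\pi^*}(t)=\sup_{\pi\in\mathcal{FG}}V_\pi(t)$.
   Context: $n\ge2$; $\Delta_n$, $\overline{\Delta}_n$ open and closed unit simplices. The market is a sequence $\{\mu(t)\}_{t\ge0}\subset\Delta_n$ with $\frac1M\le\mu_i(t+1)/\mu_i(t)\le M$ for a constant $M>0$. Relative value: $V_\pi(0)=1$, $V_\pi(t+1)=V_\pi(t)\sum_i\pi_i(\mu(t))\mu_i(t+1)/\mu_i(t)$. $\mathcal{FG}$ is the set of maps $\pi:\Delta_n\to\overline{\Delta}_n$ for which there is a concave $\Phi:\Delta_n\to(0,\infty)$ with $\sum_i\pi_i(p)\frac{q_i}{p_i}\ge\frac{\Phi(q)}{\Phi(p)}$ for all $p,q\in\Delta_n$. *)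

(* Defs.v *)
From mathcomp Require Import all_boot all_order all_algebra.
From mathcomp Require Import reals.
Set Implicit Arguments. Unset Strict Implicit. Unset Printing Implicit Defensive.
Import Order.TTheory GRing.Theory Num.Theory.
Local Open Scope ring_scope.

Section Defs.
Variables (R : realType) (n : nat).

Definition in_open_simplex (p : 'I_n -> R) : Prop :=
  (forall i, 0 < p i) /\ \sum_(i < n) p i = 1.

Definition in_closed_simplex (p : 'I_n -> R) : Prop :=
  (forall i, 0 <= p i) /\ \sum_(i < n) p i = 1.

Definition positive_concave_on_simplex (Phi : ('I_n -> R) -> R) : Prop :=
  (forall p, in_open_simplex p -> 0 < Phi p) /\
  (forall p q (l : R), in_open_simplex p -> in_open_simplex q ->
     0 <= l <= 1 ->
     l * Phi p + (1 - l) * Phi q <= Phi (fun i => l * p i + (1 - l) * q i)).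

Definition FG (pi : ('I_n -> R) -> ('I_n -> R)) : Prop :=
  (forall p, in_open_simplex p -> in_closed_simplex (pi p)) /\
  exists Phi : ('I_n -> R) -> R,
    positive_concave_on_simplex Phi /\
    forall p q, in_open_simplex p -> in_open_simplex q ->
      Phi q / Phi p <= \sum_(i < n) pi p i * (q i / p i).

Fixpoint relval (pi : ('I_n -> R) -> ('I_n -> R)) (mu : nat -> 'I_n -> R)
    (t : nat) : R :=
  match t with
  | 0 => 1
  | t'.+1 => relval pi mu t' *
             \sum_(i < n) pi (mu t') i * (mu t'.+1 i / mu t' i)
  end.

End Defs.

(* Main.v *)
Require Import Defs.
From mathcomp Require Import all_boot all_order all_algebra.
From mathcomp Require Import reals ring.
From mathcomp Require Import boolp classical_sets functions topology normedtype derive.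
Import Order.TTheory GRing.Theory Num.Theory.
Import numFieldNormedType.Exports.
Local Open Scope ring_scope.

Section Alg.
Variables (R : realType) (n : nat).

Lemma simplex_le1 (p : 'I_n -> R) : (forall i, 0 <= p i) -> \sum_i p i = 1 ->
  forall i, p i <= 1.
Proof.
move=> h0 h1 i; rewrite -h1 (bigD1 i) //= lerDl sumr_ge0 // => j _; exact: h0.
Qed.

Lemma wsum_pos (w a : 'I_n -> R) : (forall i, 0 <= w i) -> \sum_i w i = 1 ->
  (forall i, 0 < a i) -> 0 < \sum_i w i * a i.
Proof.
move=> h0 h1 ha; rewrite lt_def sumr_ge0 ?andbT; last first.
  by move=> i _; rewrite mulr_ge0 // ltW.
apply/eqP => /psumr_eq0P h.
have : \sum_i w i = 0.
  apply: big1 => i _; have /eqP := h (fun j _ => mulr_ge0 (h0 j) (ltW (ha j))) i isT.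
  by rewrite mulf_eq0 (gt_eqF (ha i)) orbF => /eqP.
by rewrite h1 => /eqP; rewrite oner_eq0.
Qed.

Lemma wsum_le (w a : 'I_n -> R) : (forall i, 0 <= w i) -> \sum_i w i = 1 ->
  (forall i, 0 <= a i) -> \sum_i w i * a i <= \sum_i a i.
Proof.
move=> h0 h1 ha; apply: ler_sum => i _; apply: ler_piMl => //.
exact: simplex_le1.
Qed.

Lemma open_ratio_le (w p q : 'I_n -> R) : in_closed_simplex w ->
  in_open_simplex p -> in_open_simplex q ->
  \sum_i w i * (q i / p i) <= \sum_i (p i)^-1.
Proof.
move=> [w0 w1] [p0 p1] [q0 q1].
apply: le_trans (wsum_le w (fun i => q i / p i) w0 w1 _) _.
  by move=> i; rewrite divr_ge0 // ltW.
apply: ler_sum => i _; rewrite ler_pdivrMr // mulVf ?gt_eqF //.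
by apply: simplex_le1 q1 i => j; exact: ltW.
Qed.

End Alg.

Section Main.
Variables (R : realType) (n : nat) (mu : nat -> 'I_n -> R).
Hypothesis hmu : forall t, in_open_simplex (mu t).
Variable t : nat.

Definition yy (k : 'I_t.+1) := mu k.
Definition JJ := ('I_t.+1 * option 'I_n)%type.

Definition BB : R := 1 + \sum_(k < t.+1) \sum_i (yy k i)^-1.

Lemma BB_ge k : \sum_i (yy k i)^-1 <= BB.
Proof.
have hp : forall k' (i : 'I_n), 0 <= (yy k' i)^-1.
  by move=> k' i; rewrite invr_ge0 ltW //; case: (hmu k') => h _; exact: h.
rewrite /BB (bigD1 k) //= addrCA lerDl addr_ge0 // sumr_ge0 // => k' _.
by apply: sumr_ge0 => i _.
Qed.


Lemma BB_pos : 0 < BB.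
Proof.
rewrite /BB ltr_pwDl // sumr_ge0 // => k _; apply: sumr_ge0 => i _.
by rewrite invr_ge0 ltW //; case: (hmu k) => h _; exact: h.
Qed.

Definition lo (j : JJ) : R := if j.2 is Some _ then 0 else BB^-1.
Definition hi (j : JJ) : R := if j.2 is Some _ then 1 else BB.

Definition Box (x : JJ -> R) := forall j, lo j <= x j <= hi j.

Definition FeasC (x : JJ -> R) :=
  [/\ forall k i, 0 <= x (k, Some i),
      forall k, \sum_i x (k, Some i) = 1,
      forall k l, x (l, None) <= x (k, None) * \sum_i x (k, Some i) * (yy l i / yy k i)
    & forall k l i, yy k = yy l -> x (k, Some i) = x (l, Some i)].

Definition obj (x : JJ -> R) : R :=
  \prod_(s < t) \sum_i x (widen_ord (leqnSn t) s, Some i) * (mu s.+1 i / mu s i).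

Lemma relvalE (pi : ('I_n -> R) -> 'I_n -> R) (t' : nat) :
  relval pi mu t' = \prod_(s < t') \sum_i pi (mu s) i * (mu s.+1 i / mu s i).
Proof. by elim: t' => [|t' IH]; rewrite ?big_ord0 // big_ord_recr /= IH. Qed.

Lemma dir2 pi : FG pi -> exists x, [/\ FeasC x, Box x & obj x = relval pi mu t].
Proof.
move=> [hcl [Phi [[Phipos _] hPhi]]].
pose x (j : JJ) := if j.2 is Some i then pi (yy j.1) i else Phi (yy j.1) / Phi (yy ord0).
have hy k : in_open_simplex (yy k) by exact: hmu.
have P0 : 0 < Phi (yy ord0) := Phipos _ (hy ord0).
exists x; split.
- split.
  + by move=> k i; rewrite /x /=; case: (hcl _ (hy k)) => h _; exact: h.
  + by move=> k; rewrite /x /=; case: (hcl _ (hy k)).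
  + move=> k l; rewrite /x /= mulrAC ler_pM2r ?invr_gt0 //.
    rewrite -ler_pdivrMl ?Phipos // mulrC; exact: hPhi.
  + by move=> k l i e; rewrite /x /= e.
- case=> k [i|] /=; rewrite /lo /hi /x /=.
    case: (hcl _ (hy k)) => h0 h1; rewrite h0 /=; exact: simplex_le1.
  have hk : 0 < Phi (yy k) := Phipos _ (hy k).
  apply/andP; split.
    have h : Phi (yy ord0) / Phi (yy k) <= BB.
      apply: le_trans (hPhi _ _ (hy k) (hy ord0)) _.
      by apply: le_trans (BB_ge k); apply: open_ratio_le => //; exact: hcl.
    by rewrite -invf_div lef_pV2 ?posrE ?divr_gt0 ?BB_pos.
  apply: le_trans (hPhi _ _ (hy ord0) (hy k)) _.
  by apply: le_trans (BB_ge ord0); apply: open_ratio_le => //; exact: hcl.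
- rewrite /obj relvalE; apply: eq_bigr => s _; apply: eq_bigr => i _.
  by rewrite /x.
Qed.

Section Dir1.
Variable x : JJ -> R.
Hypotheses (hb : Box x) (hf : FeasC x).

Definition phi k := x (k, None).
Definition ww k i := x (k, Some i).
Definition LL k (q : 'I_n -> R) := phi k * \sum_i ww k i * (q i / yy k i).
Definition kq (q : 'I_n -> R) : 'I_t.+1 := Order.arg_min ord0 xpredT (fun k => LL k q).
Definition Phi q := LL (kq q) q.

Lemma phi_pos k : 0 < phi k.
Proof.
have := hb (k, None); rewrite /lo /hi /= => /andP[h _].
by apply: lt_le_trans h; rewrite invr_gt0 BB_pos.
Qed.

Lemma ww_ge0 k i : 0 <= ww k i.
Proof. by case: hf => h _ _ _; exact: h. Qed.

Lemma ww_sum k : \sum_i ww k i = 1.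
Proof. by case: hf => _ h _ _; exact: h. Qed.

Lemma LL_pos k q : in_open_simplex q -> 0 < LL k q.
Proof.
case=> q0 _; rewrite /LL mulr_gt0 ?phi_pos //; apply: wsum_pos.
- exact: ww_ge0.
- exact: ww_sum.
- move=> i; rewrite divr_gt0 //; case: (hmu k) => h _; exact: h.
Qed.

Lemma Phi_min q k : Phi q <= LL k q.
Proof. by rewrite /Phi /kq; case: arg_minP => // k0 _ h; exact: h. Qed.

Lemma LL_yy k : LL k (yy k) = phi k.
Proof.
rewrite /LL (eq_bigr (fun i => ww k i)) ?ww_sum ?mulr1 // => i _.
by rewrite divff ?mulr1 // gt_eqF //; case: (hmu k) => h _; exact: h.
Qed.

Lemma Phi_yy k : Phi (yy k) = phi k.
Proof.
apply/eqP; rewrite eq_le; apply/andP; split.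
  by apply: le_trans (Phi_min _ k) _; rewrite LL_yy.
by case: hf => _ _ h _; rewrite /Phi /LL /phi /ww; exact: h.
Qed.

Lemma LL_lin k p q (l : R) :
  LL k (fun i => l * p i + (1 - l) * q i) = l * LL k p + (1 - l) * LL k q.
Proof.
rewrite /LL mulrCA [_ * (phi k * _)]mulrCA -mulrDr; congr (_ * _).
rewrite !mulr_sumr -big_split /=; apply: eq_bigr => i _.
rewrite /=. ring.
Qed.

Definition cc (p : 'I_n -> R) : 'I_t.+1 :=
  match pselect (exists k, yy k = p) with
  | left h => projT1 (cid h)
  | right _ => kq p
  end.

Lemma cc_min p : LL (cc p) p = Phi p.
Proof.
rewrite /cc; case: pselect => // h; case: cid => k /= <-.
by rewrite LL_yy Phi_yy.
Qed.

Definition pist (p : 'I_n -> R) (i : 'I_n) : R :=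
  phi (cc p) * (ww (cc p) i * (p i / yy (cc p) i)) / LL (cc p) p.

Lemma pist_FG : FG pist.
Proof.
split.
  move=> p hp; have hL := LL_pos (cc p) p hp; case: hp => p0 _; split.
    move=> i; rewrite /pist divr_ge0 ?(ltW hL) // mulr_ge0 ?(ltW (phi_pos _)) //.
    rewrite mulr_ge0 ?ww_ge0 // divr_ge0 ?(ltW (p0 i)) //.
    by case: (hmu (cc p)) => h _; exact: (ltW (h i)).
  by rewrite /pist -mulr_suml -mulr_sumr divff // gt_eqF.
exists Phi; split.
  split; first by move=> p hp; exact: LL_pos.
  move=> p q l hp hq /andP[l0 l1].
  rewrite /Phi LL_lin.
  apply: lerD; apply: ler_wpM2l; rewrite ?subr_ge0 //; exact: Phi_min.
move=> p q hp hq.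
have hL := LL_pos (cc p) p hp.
have -> : \sum_i pist p i * (q i / p i) = LL (cc p) q / LL (cc p) p.
  rewrite [LL (cc p) q]/LL mulr_sumr mulr_suml; apply: eq_bigr => i _; rewrite /pist.
  case: hp => p0 _.
  have y0 : yy (cc p) i != 0 by case: (hmu (cc p)) => h _; rewrite gt_eqF //; exact: h.
  have p0' : p i != 0 by rewrite gt_eqF.
  have L0 : LL (cc p) p != 0 by rewrite gt_eqF.
  by field; rewrite L0 y0 p0'.
rewrite -(cc_min p) ler_wpM2r ?invr_ge0 ?(ltW hL) //; exact: Phi_min.
Qed.

Lemma pist_val : relval pist mu t = obj x.
Proof.
rewrite relvalE /obj; apply: eq_bigr => s _; apply: eq_bigr => i _.
congr (_ * _).
rewrite /pist; set k := cc (mu s).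
have hk : yy k = mu s.
  rewrite /k /cc; case: pselect => [h|]; first by case: cid.
  by case; exists (widen_ord (leqnSn t) s).
rewrite -[in LL k _]hk LL_yy -[in mu s i]hk divff; last first.
  by case: (hmu k) => h _; rewrite gt_eqF //; exact: h.
rewrite mulr1 mulrAC divff ?mul1r ?gt_eqF ?phi_pos //.
by case: hf => _ _ _ h; rewrite /ww (h k (widen_ord (leqnSn t) s)).
Qed.

End Dir1.
End Main.
Local Open Scope classical_set_scope.
Section Topo.
Variables (R : realType) (X : topologicalType).
Lemma cstC (c : R) : continuous (fun _ : X => c).
Proof. exact: cst_continuous. Qed.
Lemma addC {f g : X -> R} : continuous f -> continuous g ->
  continuous (fun x => f x + g x).
Proof. move=> hf hg x; exact: (continuousD (hf x) (hg x)). Qed.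

Lemma mulC {f g : X -> R} : continuous f -> continuous g ->
  continuous (fun x => f x * g x).
Proof. move=> hf hg x; exact: (continuousM (hf x) (hg x)). Qed.

Lemma oppC {f : X -> R} : continuous f -> continuous (fun x => - f x).
Proof. move=> hf x; exact: (continuousN (hf x)). Qed.
Lemma eqC {g f : X -> R} : continuous g -> (forall x, f x = g x) -> continuous f.
Proof. by move=> h e; have -> : f = g by apply/funext. Qed.

Lemma sumC (I : Type) (r : seq I) (P : pred I) (F : I -> X -> R) :
  (forall i, continuous (F i)) -> continuous (fun x => \sum_(i <- r | P i) F i x).
Proof.
move=> hF; elim: r => [|i r IH].
  by apply: (eqC (cstC 0)) => x; rewrite big_nil.
case Pi: (P i).
  apply: (eqC (addC (hF i) IH)).
  by move=> x; rewrite big_cons Pi.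
by apply: (eqC IH) => x; rewrite big_cons Pi.
Qed.

Lemma prodC (I : Type) (r : seq I) (P : pred I) (F : I -> X -> R) :
  (forall i, continuous (F i)) -> continuous (fun x => \prod_(i <- r | P i) F i x).
Proof.
move=> hF; elim: r => [|i r IH].
  by apply: (eqC (cstC 1)) => x; rewrite big_nil.
case Pi: (P i).
  apply: (eqC (mulC (hF i) IH)).
  by move=> x; rewrite big_cons Pi.
by apply: (eqC IH) => x; rewrite big_cons Pi.
Qed.

Lemma closed_leC (f g : X -> R) : continuous f -> continuous g ->
  closed [set x | f x <= g x].
Proof.
move=> hf hg.
have -> : [set x | f x <= g x] = (fun x => g x - f x) @^-1` [set y | 0 <= y].
  by apply/seteqP; split => x /=; rewrite subr_ge0.
apply: preimage_closed; last exact: closed_ge.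
move=> x _; apply: addC => //; exact: oppC.
Qed.

Lemma closed_forall (I : Type) (Q : I -> Prop) (A : I -> set X) :
  (forall i, closed (A i)) -> closed [set x | forall i, Q i -> A i x].
Proof.
move=> hA.
have -> : [set x | forall i, Q i -> A i x] = \bigcap_(i in Q) A i.
  by apply/seteqP; split => x /=.
by apply: closed_bigI => i _; exact: hA.
Qed.

End Topo.

Section Box.
Variables (R : realType) (J : finType).
Definition XX := {ptws J -> R}.
Lemma coordC (j : J) : continuous (fun x : XX => x j).
Proof. exact: (@proj_continuous J (fun _ => R) j). Qed.
Lemma box_compact (lo hi : J -> R) :
  compact [set x : XX | forall j, lo j <= x j <= hi j].
Proof.
have := @tychonoff J (fun _ => R) (fun j => `[lo j, hi j]%classic) (fun j => @segment_compact R (lo j) (hi j)).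
congr compact; apply/seteqP; split => x /= h j; move: (h j) => /=; by rewrite in_itv.
Qed.
End Box.
Local Open Scope ring_scope.

Lemma market_FG (R : realType) (n : nat) : FG (fun p : 'I_n -> R => p).
Proof.
split; first by move=> p [h0 h1]; split => // i; exact: ltW.
exists (fun _ => 1); split.
  by split => // p q l _ _ _; rewrite mulr1 mulr1 addrC subrK.
move=> p q [p0 _] [_ q1]; rewrite divr1 -q1 le_eqVlt; apply/orP; left; apply/eqP.
by apply: eq_bigr => i _; rewrite mulrC divfK // gt_eqF.
Qed.

Lemma feas_closed (R : realType) (n : nat) (mu : nat -> 'I_n -> R) (t : nat) :
  closed [set x : XX R (JJ n t) | FeasC R n mu t x].
Proof.
set C1 := [set x : XX R (JJ n t) | forall p : 'I_t.+1 * 'I_n, True ->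
  [set x : XX R (JJ n t) | 0 <= x (p.1, Some p.2)] x].
set C2 := [set x : XX R (JJ n t) | forall k : 'I_t.+1, True ->
  [set x : XX R (JJ n t) | \sum_i x (k, Some i) <= 1] x].
set C3 := [set x : XX R (JJ n t) | forall k : 'I_t.+1, True ->
  [set x : XX R (JJ n t) | 1 <= \sum_i x (k, Some i)] x].
set C4 := [set x : XX R (JJ n t) | forall p : 'I_t.+1 * 'I_t.+1, True ->
  [set x : XX R (JJ n t) | x (p.2, None) <=
      x (p.1, None) * \sum_i x (p.1, Some i) * (yy R n mu t p.2 i / yy R n mu t p.1 i)] x].
set C5 := [set x : XX R (JJ n t) | forall p : 'I_t.+1 * 'I_t.+1 * 'I_n,
  yy R n mu t p.1.1 = yy R n mu t p.1.2 ->
  [set x : XX R (JJ n t) | x (p.1.1, Some p.2) <= x (p.1.2, Some p.2)] x].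
have -> : [set x : XX R (JJ n t) | FeasC R n mu t x] = C1 `&` C2 `&` C3 `&` C4 `&` C5.
  apply/seteqP; split => x /=.
    case=> h1 h2 h3 h4; split; first split; first split; first split.
    - by move=> p _ /=; exact: h1.
    - by move=> k _ /=; rewrite h2.
    - by move=> k _ /=; rewrite h2.
    - by move=> p _ /=; exact: h3.
    - by move=> p e /=; rewrite (h4 _ _ _ e).
  move=> [[[[h1 h2] h3] h4] h5]; split.
  - by move=> k i; exact: (h1 (k, i)).
  - by move=> k; apply/eqP; rewrite eq_le; rewrite (h2 k) // (h3 k).
  - by move=> k l; exact: (h4 (k, l)).
  - move=> k l i e; apply/eqP; rewrite eq_le (h5 (k, l, i)) // (h5 (l, k, i)) //.
apply: closedI; [apply: closedI; [apply: closedI; [apply: closedI|]|]|];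
  apply: closed_forall => p; apply: closed_leC.
- exact: cstC.
- exact: (coordC _ _ (p.1, Some p.2)).
- by apply: sumC => i; exact: (coordC _ _ (p, Some i)).
- exact: cstC.
- exact: cstC.
- by apply: sumC => i; exact: (coordC _ _ (p, Some i)).
- exact: (coordC _ _ (p.2, None)).
- apply: mulC; first exact: (coordC _ _ (p.1, None)).
  apply: sumC => i; apply: mulC; first exact: (coordC _ _ (p.1, Some i)).
  exact: cstC.
- exact: (coordC _ _ (p.1.1, Some p.2)).
- exact: (coordC _ _ (p.1.2, Some p.2)).
Qed.

Theorem lemma4p5 (R : realType) (n : nat) (hn : (2 <= n)%N)
  (mu : nat -> 'I_n -> R) (hmu : forall t, in_open_simplex (mu t))
  (M : R) (hM : 0 < M)
  (hratio : forall (t : nat) (i : 'I_n),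
     M^-1 <= mu t.+1 i / mu t i /\ mu t.+1 i / mu t i <= M)
  (t : nat) :
  exists2 pistar : ('I_n -> R) -> ('I_n -> R),
    FG pistar &
    forall pi, FG pi -> relval pi mu t <= relval pistar mu t.
Proof.
pose S := [set x : XX R (JJ n t) | Box R n mu t x] `&` [set x : XX R (JJ n t) | FeasC R n mu t x].
have S0 : S !=set0.
  have [x [h1 h2 _]] := @dir2 R n mu hmu t _ (market_FG R n).
  by exists x.
have cS : compact S.
  apply: compact_closedI; last exact: feas_closed.
  exact: (@box_compact R _ (lo R n mu t) (hi R n mu t)).
have cobj : continuous (obj R n mu t : XX R (JJ n t) -> R).
  apply: prodC => s; apply: sumC => i; apply: mulC; last exact: cstC.
  exact: (coordC _ _ (widen_ord (leqnSn t) s, Some i)).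
have cw : {within S, continuous (obj R n mu t : XX R (JJ n t) -> R)}.
  by apply: continuous_subspaceT.
have [xs xsS xmax] := compact_EVT_max S0 cS cw.
move: xsS; rewrite inE => -[xb xf].
exists (pist R n mu t xs); first exact: pist_FG.
move=> pi hpi; rewrite pist_val //.
have [x [h1 h2 <-]] := @dir2 R n mu hmu t _ hpi.
by apply: xmax; rewrite inE.
Qed.
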